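(* Let $S$ be a semigroup with finite $\mathcal{R}$-height whose kernel is completely simple, and let $B$ be a bi-ideal of $S$. Then $\mathrm{H}_{\mathcal{R}}(B)\leq 3\,\mathrm{H}_{\mathcal{R}}(S)-2$.
   Context: For a semigroup $S$, $S^1$ denotes $S$ with an identity adjoined if necessary. Green's preorder: $a\leq_{\mathcal{R}} b$ iff $aS^1\subseteq bS^1$; $\mathcal{R}$ is the associated equivalence; the $\mathcal{R}$-height $\mathrm{H}_{\mathcal{R}}$ of a semigroup is the supremum of the cardinalities of chains in its poset of $\mathcal{R}$-classes. A bi-ideal is a non-empty subset $B$ with $BS^1B\subseteq B$; $\mathrm{H}_{\mathcal{R}}(B)$ is computed in $B$ itself. The kernel of $S$ is its unique minimal ideal; a semigroup is completely simple if it has no proper ideals and has both a minimal right ideal and a minimal left ideal. *)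

(* Defs.v *)
From Stdlib Require Import List.
Import ListNotations.

Set Implicit Arguments.

Section Semigroups.
Variable T : Type.
Variable mul : T -> T -> T.

Definition subset (A B : T -> Prop) : Prop := forall x, A x -> B x.
Definition seteq (A B : T -> Prop) : Prop := forall x, A x <-> B x.

(* Green's R-preorder computed inside the subsemigroup A:
   a <=_R b  iff  a A^1 ⊆ b A^1  iff  a = b or a = b s for some s in A. *)
Definition R_le (A : T -> Prop) (a b : T) : Prop :=
  a = b \/ exists s, A s /\ a = mul b s.

Definition R_lt (A : T -> Prop) (a b : T) : Prop :=
  R_le A a b /\ ~ R_le A b a.

(* A chain of R-classes of A, listed as representatives x1 >_R x2 >_R ... >_R xk.
   Chains in the poset of R-classes of cardinality k correspond exactly to such lists
   of length k. *)
Fixpoint R_chain (A : T -> Prop) (s : list T) : Prop :=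
  match s with
  | [] => True
  | x :: s' =>
      A x /\ (match s' with [] => True | y :: _ => R_lt A y x end) /\ R_chain A s'
  end.

(* The R-height of A equals the natural number n (in particular it is finite):
   n is the supremum (here a maximum) of the cardinalities of chains of R-classes. *)
Definition R_height_eq (A : T -> Prop) (n : nat) : Prop :=
  (exists s, R_chain A s /\ length s = n) /\
  (forall s, R_chain A s -> length s <= n).

Definition is_ideal_in (K I : T -> Prop) : Prop :=
  subset I K /\ (exists x, I x) /\
  (forall k i, K k -> I i -> I (mul k i) /\ I (mul i k)).

Definition is_right_ideal_in (K I : T -> Prop) : Prop :=
  subset I K /\ (exists x, I x) /\ (forall i k, I i -> K k -> I (mul i k)).

Definition is_left_ideal_in (K I : T -> Prop) : Prop :=
  subset I K /\ (exists x, I x) /\ (forall k i, K k -> I i -> I (mul k i)).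

Definition is_min_right_ideal_in (K I : T -> Prop) : Prop :=
  is_right_ideal_in K I /\ forall J, is_right_ideal_in K J -> subset J I -> seteq J I.

Definition is_min_left_ideal_in (K I : T -> Prop) : Prop :=
  is_left_ideal_in K I /\ forall J, is_left_ideal_in K J -> subset J I -> seteq J I.

Definition completely_simple (K : T -> Prop) : Prop :=
  (exists x, K x) /\
  (forall x y, K x -> K y -> K (mul x y)) /\
  (forall I, is_ideal_in K I -> seteq I K) /\
  (exists I, is_min_right_ideal_in K I) /\
  (exists I, is_min_left_ideal_in K I).

Definition is_kernel (K : T -> Prop) : Prop :=
  is_ideal_in (fun _ => True) K /\ forall I, is_ideal_in (fun _ => True) I -> subset K I.

Definition is_bi_ideal (B : T -> Prop) : Prop :=
  (exists x, B x) /\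
  (forall b b', B b -> B b' -> B (mul b b')) /\
  (forall b s b', B b -> B b' -> B (mul (mul b s) b')).

End Semigroups.

(* Main.v *)
Require Import Defs.
From Stdlib Require Import List Lia Classical Arith.
Import ListNotations.
Set Implicit Arguments.

Lemma lt_step (T : Type) (mul : T -> T -> T) (A : T -> Prop) a b :
  R_lt mul A a b -> exists u, A u /\ a = mul b u.
Proof.
  intros [[E|H] N]; [|exact H].
  exfalso; apply N; left; auto.
Qed.

Lemma leS_trans (T : Type) (mul : T -> T -> T)
  (mulA : forall x y z, mul x (mul y z) = mul (mul x y) z) a b c :
  R_le mul (fun _ => True) a b -> R_le mul (fun _ => True) b c ->
  R_le mul (fun _ => True) a c.
Proof.
  intros [E|[s [_ E]]] [F|[t [_ F]]].
  - left; congruence.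
  - right; exists t; split; auto; congruence.
  - right; exists s; split; auto; congruence.
  - right; exists (mul t s); split; auto. rewrite E, F, mulA; reflexivity.
Qed.

Lemma leBS (T : Type) (mul : T -> T -> T) (B : T -> Prop) a b :
  R_le mul B a b -> R_le mul (fun _ => True) a b.
Proof. intros [E|[s [_ E]]]; [left|right; exists s]; auto. Qed.

Lemma strict3 (T : Type) (mul : T -> T -> T)
  (mulA : forall x y z, mul x (mul y z) = mul (mul x y) z)
  (B : T -> Prop) (hB : is_bi_ideal mul B) x y z w :
  R_lt mul B y x -> R_lt mul B z y -> R_lt mul B w z ->
  R_lt mul (fun _ => True) w x.
Proof.
  intros H1 H2 H3.
  destruct hB as [_ [hB2 hB3]].
  split.
  - apply (leS_trans mulA) with z; [apply leBS with B; apply H3|].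
    apply (leS_trans mulA) with y; apply leBS with B; [apply H2|apply H1].
  - intros Hxw.
    destruct (lt_step H1) as [u [Bu Eu]].
    destruct (lt_step H3) as [v [Bv Ev]].
    apply (proj2 H2).
    destruct Hxw as [E|[q [_ E]]].
    + right; exists (mul v u); split; [apply hB2; auto|].
      rewrite Eu, E, Ev, mulA; reflexivity.
    + right; exists (mul (mul v q) u); split; [apply hB3; auto|].
      rewrite Eu, E, Ev, !mulA; reflexivity.
Qed.

Lemma last_irr (T : Type) (a : T) l d d' : last (a :: l) d = last (a :: l) d'.
Proof.
  revert a; induction l as [|b l IH]; intros a; simpl; auto.
  destruct l; auto. apply (IH b).
Qed.

Lemma chain_app (T : Type) (mul : T -> T -> T) (A : T -> Prop) :
  forall l y d, R_chain mul A l -> l <> [] -> A y -> R_lt mul A y (last l d) ->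
  R_chain mul A (l ++ [y]).
Proof.
  induction l as [|a l IH]; intros y d Hc Hn Ay Hl; [congruence|].
  destruct l as [|b l].
  - simpl in *. tauto.
  - destruct Hc as [Aa [Hba Hc]].
    change ((a :: b :: l) ++ [y]) with (a :: ((b :: l) ++ [y])).
    split; [auto|]. split; [simpl; auto|].
    apply IH with d; auto; congruence.
Qed.

Lemma lemA (T : Type) (mul : T -> T -> T)
  (mulA : forall x y z, mul x (mul y z) = mul (mul x y) z)
  (B : T -> Prop) (hB : is_bi_ideal mul B) :
  forall n x s, R_chain mul B (x :: s) -> 3 * n + 2 <= length (x :: s) ->
  exists t c d, R_chain mul (fun _ => True) (x :: t) /\ length (x :: t) = n + 1 /\
    last (x :: t) x = c /\ B c /\ B d /\ R_lt mul B d c.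
Proof.
  induction n as [|n IH]; intros x s Hc Hl.
  - destruct s as [|y s]; [simpl in Hl; lia|].
    exists [], x, y. destruct Hc as [Bx [Hyx Hc]].
    simpl. repeat split; auto; try apply Hyx. apply Hc.
  - destruct s as [|y [|z [|w s]]]; try (simpl in Hl; lia).
    destruct Hc as [Bx [Hyx [By [Hzy [Bz [Hwz Hc]]]]]].
    destruct (IH w s Hc) as [t [c [d [Ht [Hlt [Hlast R]]]]]]; [simpl in *; lia|].
    exists (w :: t), c, d.
    split; [|split; [simpl in *; lia|split; [|exact R]]].
    + split; [auto|split; auto]. eapply strict3; eauto.
    + rewrite <- Hlast. change (last (x :: w :: t) x) with (last (w :: t) x).
      apply last_irr.
Qed.

Theorem corollary3p4 (T : Type) (mul : T -> T -> T)
  (mulA : forall x y z, mul x (mul y z) = mul (mul x y) z)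
  (h : nat) (hS : R_height_eq mul (fun _ => True) h)
  (K : T -> Prop) (hK : is_kernel mul K) (hKcs : completely_simple mul K)
  (B : T -> Prop) (hB : is_bi_ideal mul B) :
  forall s : list T, R_chain mul B s -> length s <= 3 * h - 2.
Proof.
  intros s Hs.
  destruct hS as [_ Hmax].
  destruct hK as [[_ [[x0 Kx0] KI]] _].
  assert (h1 : 1 <= h).
  { specialize (Hmax [x0]). simpl in Hmax. apply Hmax; tauto. }
  destruct (le_lt_dec (length s) (3 * h - 2)) as [ok|bad]; [exact ok|exfalso].
  destruct s as [|x s]; [simpl in bad; lia|].
  destruct (lemA mulA hB (h - 1) Hs) as [t [c [d [Ht [Hlt [Hlast [Bc [Bd Rdc]]]]]]]];
    [lia|].
  assert (Hmin : forall y, R_le mul (fun _ => True) y c -> R_le mul (fun _ => True) c y).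
  { intros y Hy. destruct (classic (R_le mul (fun _ => True) c y)) as [E|N]; [exact E|].
    exfalso.
    assert (Hc2 : R_chain mul (fun _ => True) ((x :: t) ++ [y])).
    { apply chain_app with x; auto; [congruence|]. rewrite Hlast. split; auto. }
    specialize (Hmax _ Hc2). rewrite app_length in Hmax. simpl in Hmax, Hlt. lia. }
  destruct hKcs as [_ [Kmul [_ [_ [L [[LsubK [[l Ll] Lleft]] Lmin]]]]]].
  assert (Kl : K l) by (apply LsubK; auto).
  set (J := fun z => exists k, K k /\ z = mul (mul k c) l).
  assert (HJ : is_left_ideal_in mul K J).
  { split; [|split].
    - intros z [k [Kk E]]; subst z. apply (proj1 (KI _ _ I Kl)).
    - exists (mul (mul l c) l); exists l; auto.
    - intros k' z Kk' [k [Kk E]]; subst z. exists (mul k' k); split; auto.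
      rewrite !mulA; reflexivity. }
  assert (HJL : subset J L).
  { intros z [k [Kk E]]; subst z. apply Lleft; auto. apply (proj2 (KI c k I Kk)). }
  destruct (proj2 (Lmin J HJ HJL l) Ll) as [k [Kk El]].
  assert (Hreg : c = mul (mul c k) c).
  { destruct (Hmin (mul c l)) as [E|[z [_ E]]]; [right; exists l; auto| |].
    - rewrite E at 1. rewrite El. rewrite !mulA.
      rewrite <- (mulA (mul c k) c l). rewrite <- E. reflexivity.
    - rewrite E at 1. rewrite El.
      replace (mul (mul c (mul (mul k c) l)) z) with (mul (mul c k) (mul (mul c l) z))
        by (rewrite !mulA; reflexivity).
      rewrite <- E. reflexivity. }
  destruct (lt_step Rdc) as [u [Bu Eu]].
  apply (proj2 Rdc).
  destruct (Hmin (mul d u)) as [E|[z [_ E]]].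
  - right; exists (mul u u); split; auto. rewrite Eu, mulA; reflexivity.
  - right; exists u; auto.
  - right; exists (mul (mul u (mul z k)) c); split.
    + destruct hB as [_ [_ hB3]]. apply hB3; auto.
    + rewrite Hreg at 1. rewrite E at 1. rewrite !mulA. reflexivity.
Qed.
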